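(* Let $A,B,C,Y\in\mathbb{R}^{n\times n}$ and define the componentwise backward error $$\mu(Y)=\min\{\epsilon\ge0:\ (A+\Delta A)Y+Y^{\top}(B+\Delta B)^{\top}=C+\Delta C,\ |\Delta A|\le\epsilon|A|,\ |\Delta B|\le\epsilon|B|,\ |\Delta C|\le\epsilon|C|\},$$ where the inequalities between matrices are entrywise and $|M|=(|m_{ij}|)$. Let $D_1=\mathrm{diag}(\mathrm{vec}(A))$, $D_2=\mathrm{diag}(\mathrm{vec}(B))$, $D_3=\mathrm{diag}(\mathrm{vec}(C))$, $$H=[\,(Y^{\top}\otimes I)D_1,\ (I\otimes Y^{\top})\Pi D_2,\ -D_3\,]\in\mathbb{R}^{n^2\times 3n^2},\qquad \widetilde R=C-AY-Y^{\top}B^{\top},\qquad r=\mathrm{vec}(\widetilde R).$$ Assume $H$ has full (row) rank $n^2$, and let $H^{\top}=Q\begin{bmatrix}R\\0\end{bmatrix}$ be a QR decomposition with $Q\in\mathbb{R}^{3n^2\times3n^2}$ orthogonal and $R\in\mathbb{R}^{n^2\times n^2}$ upper triangular (nonsingular). Set $\bar z_1=R^{-\top}r$ and $$\overline{\mu}(Y)=\left\|Q\begin{bmatrix}\bar z_1\\0\end{bmatrix}\right\|_\infty .$$ Then $$\mu(Y)\le\overline{\mu}(Y)\le\sqrt{3}\,n\,\mu(Y).$$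
   Context: $\mathrm{vec}(M)$ stacks the columns of $M$ into a vector; $\mathrm{diag}(v)$ is the diagonal matrix with diagonal $v$; $\otimes$ is the Kronecker product; $I$ is the $n\times n$ identity; $\Pi$ is the $n^2\times n^2$ permutation matrix with $\Pi\,\mathrm{vec}(M)=\mathrm{vec}(M^{\top})$ for all $M\in\mathbb{R}^{n\times n}$. $\|\cdot\|_\infty$ is the vector max-norm. (When $H$ is rank-deficient, $\mu(Y)$ is regarded as infinite.) *)

(* Defs.v *)
From HB Require Import structures.
From mathcomp Require Import all_boot all_order all_algebra.
Set Implicit Arguments. Unset Strict Implicit. Unset Printing Implicit Defensive.
Import Order.TTheory GRing.Theory Num.Theory.
Local Open Scope ring_scope.

(* decomposition of an index of 'I_(m*n) into the pair (i,j) with value i*n+j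
   (inverse of mxvec_index) *)
Definition vidx (m n : nat) (x : 'I_(m * n)) : 'I_m * 'I_n :=
  enum_val (cast_ord (esym (mxvec_cast m n)) x).

(* vec M : stacks the columns of M (column-major), entry (i,j) at index j*n+i *)
Definition vec (R : Type) (m n : nat) (M : 'M[R]_(m, n)) : 'cV[R]_(n * m) :=
  (mxvec M^T)^T.

Definition kron (R : pzRingType) (p q r s : nat) (A : 'M[R]_(p, q)) (B : 'M[R]_(r, s))
  : 'M[R]_(p * r, q * s) :=
  \matrix_(x, y) (A (vidx x).1 (vidx y).1 * B (vidx x).2 (vidx y).2).

(* The vec-permutation (commutation) matrix Pi: Pi *m vec M = vec M^T *)
Definition vecperm (R : pzRingType) (n : nat) : 'M[R]_(n * n) :=
  \matrix_(x, y) ((vidx x == ((vidx y).2, (vidx y).1))%:R).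

Definition diagv (R : pzRingType) (k : nat) (v : 'cV[R]_k) : 'M[R]_k := diag_mx v^T.

Definition norminf (R : realDomainType) (k : nat) (v : 'cV[R]_k) : R :=
  \big[Num.max/0]_(i < k) `|v i 0|.

Definition feasible (R : realDomainType) (n : nat) (A B C Y : 'M[R]_n) (eps : R) : Prop :=
  0 <= eps /\
  exists dA dB dC : 'M[R]_n,
    (A + dA) *m Y + Y^T *m (B + dB)^T = C + dC /\
    (forall i j, `|dA i j| <= eps * `|A i j|) /\
    (forall i j, `|dB i j| <= eps * `|B i j|) /\
    (forall i j, `|dC i j| <= eps * `|C i j|).

Definition is_min (R : realDomainType) (P : R -> Prop) (m : R) : Prop :=
  P m /\ forall e, P e -> m <= e.

Definition Hmat (R : pzRingType) (n : nat) (A B C Y : 'M[R]_n)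
  : 'M[R]_(n * n, n * n + (n * n + n * n)) :=
  row_mx (kron Y^T 1%:M *m diagv (vec A))
    (row_mx (kron 1%:M Y^T *m vecperm R n *m diagv (vec B)) (- diagv (vec C))).

Lemma vidxK (m n : nat) (i : 'I_m) (j : 'I_n) : vidx (mxvec_index i j) = (i, j).
Proof. by rewrite /vidx /mxvec_index cast_ordK enum_rankK. Qed.

Lemma vidx_inj (m n : nat) : injective (@vidx m n).
Proof. by move=> x y /(can_inj enum_valK)/(can_inj (@cast_ordKV _ _ _)). Qed.

Lemma vecE (R : Type) (m n : nat) (M : 'M[R]_(m, n)) (x : 'I_(n * m)) :
  vec M x 0 = M (vidx x).2 (vidx x).1.
Proof. by case/mxvec_indexP: x => i j; rewrite /vec mxE mxvecE vidxK mxE. Qed.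

Lemma vecpermP (R : pzRingType) (n : nat) (M : 'M[R]_n) :
  vecperm R n *m vec M = vec M^T.
Proof.
apply/colP=> x; rewrite !mxE (bigD1 (mxvec_index (vidx x).2 (vidx x).1)) //=.
rewrite big1 ?addr0.
  rewrite !mxE vidxK /= -surjective_pairing eqxx mul1r mxvecE mxE.
  by have := vecE M^T x; rewrite /vec mxE => ->; rewrite mxE.
move=> y hy; rewrite !mxE; case: eqP => [E|]; last by rewrite mul0r.
case/eqP: hy; apply: vidx_inj; rewrite vidxK E /=.
by case: (vidx y).
Qed.

(* Main.v *)
Require Import Defs.
From HB Require Import structures.
From mathcomp Require Import all_boot all_order all_algebra.
From mathcomp Require Import lra ring.
Set Implicit Arguments. Unset Strict Implicit. Unset Printing Implicit Defensive.
Import Order.TTheory GRing.Theory Num.Theory.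
Local Open Scope ring_scope.

Lemma sum_vidx (R : pzRingType) n (F : 'I_(n*n) -> R) :
  \sum_k F k = \sum_i \sum_j F (mxvec_index i j).
Proof.
rewrite pair_big /=.
rewrite (reindex (uncurry (@mxvec_index n n))) //=.
  by apply: eq_bigr => -[i j].
by case: (curry_mxvec_bij n n) => g h1 h2; exists g => x _; [apply: h1|apply: h2].
Qed.

Lemma kron_vecL (R : comPzRingType) n (Y M : 'M[R]_n) :
  kron Y^T 1%:M *m vec M = vec (M *m Y).
Proof.
apply/colP => x; case/mxvec_indexP: x => j i.
rewrite mxE vecE vidxK /= mxE sum_vidx.
apply: eq_bigr => k _.
rewrite (bigD1 i) //= big1 ?addr0.
  by rewrite vecE vidxK /= !mxE !vidxK /= eqxx mulr1 mulrC.
by move=> l hl; rewrite vecE vidxK /= !mxE !vidxK /= eq_sym (negPf hl) mulr0 mul0r.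
Qed.

Lemma kron_vecR (R : pzRingType) n (Y M : 'M[R]_n) :
  kron 1%:M Y^T *m vec M = vec (Y^T *m M).
Proof.
apply/colP => x; case/mxvec_indexP: x => j i.
rewrite mxE vecE vidxK /= mxE sum_vidx.
rewrite (bigD1 j) //= [X in _ + X]big1 ?addr0.
  apply: eq_bigr => l _.
  by rewrite vecE vidxK /= !mxE !vidxK /= eqxx mul1r.
move=> k hk; apply: big1 => l _.
by rewrite vecE vidxK /= !mxE !vidxK /= eq_sym (negPf hk) !mul0r.
Qed.

Definition unvec (R : Type) n (a : 'cV[R]_(n*n)) : 'M[R]_n :=
  \matrix_(i, j) a (mxvec_index j i) 0.

Lemma unvecK (R : Type) n (a : 'cV[R]_(n*n)) : vec (unvec a) = a.
Proof.
apply/matrixP => x y; rewrite (ord1 y).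
by case/mxvec_indexP: x => j i; rewrite vecE vidxK /= mxE.
Qed.

Lemma vec_inj (R : Type) n (M N : 'M[R]_n) : vec M = vec N -> M = N.
Proof.
move=> h; apply/matrixP => i j.
by have := congr1 (fun v : 'cV[R]_(n*n) => v (mxvec_index j i) 0) h; rewrite /= !vecE vidxK.
Qed.

Lemma vecD (R : pzRingType) n (M N : 'M[R]_n) : vec (M + N) = vec M + vec N.
Proof. by apply/colP => x; rewrite [RHS]mxE !vecE mxE. Qed.

Lemma vecN (R : pzRingType) n (M : 'M[R]_n) : vec (- M) = - vec M.
Proof. by apply/colP => x; rewrite [RHS]mxE !vecE mxE. Qed.

Definition had (R : pzRingType) n (A M : 'M[R]_n) : 'M[R]_n :=
  \matrix_(i, j) (A i j * M i j).

Lemma diagv_vec (R : pzRingType) n (A M : 'M[R]_n) :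
  diagv (vec A) *m vec M = vec (had A M).
Proof.
apply/colP => x; rewrite /diagv mul_diag_mx mxE [(vec A)^T _ _]mxE.
by rewrite !vecE mxE.
Qed.

Lemma Hmat_mul (R : comPzRingType) n (A B C Y EA EB EC : 'M[R]_n) :
  Hmat A B C Y *m col_mx (vec EA) (col_mx (vec EB) (vec EC)) =
  vec (had A EA *m Y + Y^T *m (had B EB)^T - had C EC).
Proof.
rewrite /Hmat !mul_row_col -!mulmxA !diagv_vec kron_vecL vecpermP kron_vecR.
by rewrite mulNmx diagv_vec !vecD vecN addrA.
Qed.

Lemma col_bound (R : numDomainType) k1 k2 (u : 'cV[R]_k1) (v : 'cV[R]_k2) e :
  (forall i, `|u i 0| <= e) -> (forall i, `|v i 0| <= e) ->
  forall i, `|col_mx u v i 0| <= e.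
Proof.
move=> hu hv i; rewrite -(splitK i); case: (split i) => k /=.
  by rewrite col_mxEu.
by rewrite col_mxEd.
Qed.

Lemma sol_feasible (R : realFieldType) n (A B C Y : 'M[R]_n)
  (x : 'cV[R]_(n * n + (n * n + n * n))) e :
  0 <= e -> Hmat A B C Y *m x = vec (C - A *m Y - Y^T *m B^T) ->
  (forall i, `|x i 0| <= e) -> feasible A B C Y e.
Proof.
move=> he hx hb.
set a := usubmx x; set bc := dsubmx x; set b := usubmx bc; set c := dsubmx bc.
have hxe : x = col_mx (vec (unvec a)) (col_mx (vec (unvec b)) (vec (unvec c))).
  by rewrite !unvecK /b /c vsubmxK /a /bc vsubmxK.
rewrite hxe Hmat_mul in hx; move/vec_inj: hx => hx.
split=> //; exists (had A (unvec a)), (had B (unvec b)), (had C (unvec c)).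
split.
  rewrite mulmxDl linearD /= mulmxDr; apply/matrixP => i j.
  have := congr1 (fun M : 'M[R]_n => M i j) hx => /=.
  rewrite !mxE => h; lra.
split; [|split] => i j; rewrite !mxE normrM mulrC; apply: ler_wpM2r => //;
  by rewrite !mxE; apply: hb.
Qed.

Lemma feasible_sol (R : realFieldType) n (A B C Y : 'M[R]_n) e :
  feasible A B C Y e ->
  exists x : 'cV[R]_(n * n + (n * n + n * n)),
    Hmat A B C Y *m x = vec (C - A *m Y - Y^T *m B^T) /\
    forall i, `|x i 0| <= e.
Proof.
move=> [he [dA [dB [dC [heq [hA [hB hC]]]]]]].
have hadE : forall M dM : 'M[R]_n, (forall i j, `|dM i j| <= e * `|M i j|) ->
    had M (\matrix_(i, j) (dM i j / M i j)) = dM.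
  move=> M dM h; apply/matrixP=> i j; rewrite !mxE.
  have [E|nz] := eqVneq (M i j) 0.
    have := h i j; rewrite E normr0 mulr0 normr_le0 => /eqP ->.
    by rewrite mul0r.
  by rewrite mulrC divfK.
have bnd : forall M dM : 'M[R]_n, (forall i j, `|dM i j| <= e * `|M i j|) ->
    forall k, `|vec (\matrix_(i, j) (dM i j / M i j)) k 0| <= e.
  move=> M dM h k; rewrite vecE mxE.
  set i := (vidx k).2; set j := (vidx k).1.
  have [E|nz] := eqVneq (M i j) 0.
    by rewrite E invr0 mulr0 normr0.
  by rewrite normrM normfV ler_pdivrMr ?normr_gt0 // h.
exists (col_mx (vec (\matrix_(i, j) (dA i j / A i j)))
         (col_mx (vec (\matrix_(i, j) (dB i j / B i j)))
                 (vec (\matrix_(i, j) (dC i j / C i j))))).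
split.
  rewrite Hmat_mul !hadE //; congr vec.
  move: heq; rewrite mulmxDl linearD /= mulmxDr => heq.
  apply/matrixP => i j.
  have := congr1 (fun M : 'M[R]_n => M i j) heq => /=.
  rewrite !mxE => h; lra.
by apply: col_bound; [|apply: col_bound]; apply: bnd.
Qed.

Definition ss (R : pzRingType) k (v : 'cV[R]_k) : R := \sum_i v i 0 ^+ 2.

Lemma ss_tr (R : comPzRingType) k (v : 'cV[R]_k) : ss v = (v^T *m v) 0 0.
Proof. by rewrite /ss mxE; apply: eq_bigr => i _; rewrite mxE expr2. Qed.

Lemma ss_orth (R : comPzRingType) k (Q : 'M[R]_k) (v : 'cV[R]_k) :
  Q^T *m Q = 1%:M -> ss (Q *m v) = ss v.
Proof.
by move=> h; rewrite !ss_tr trmx_mul mulmxA -(mulmxA v^T) h mulmx1.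
Qed.

Lemma ss_col (R : pzRingType) k1 k2 (u : 'cV[R]_k1) (v : 'cV[R]_k2) :
  ss (col_mx u v) = ss u + ss v.
Proof.
rewrite /ss big_split_ord /=; congr (_ + _); apply: eq_bigr => i _.
  by rewrite col_mxEu.
by rewrite col_mxEd.
Qed.

Lemma ss_ge0 (R : realDomainType) k (v : 'cV[R]_k) : 0 <= ss v.
Proof. by apply: sumr_ge0 => i _; rewrite sqr_ge0. Qed.

Lemma ss_entry (R : realDomainType) k (v : 'cV[R]_k) i : v i 0 ^+ 2 <= ss v.
Proof.
rewrite /ss (bigD1 i) //= lerDl; apply: sumr_ge0 => j _; exact: sqr_ge0.
Qed.

Lemma norminf_ge0 (R : realDomainType) k (v : 'cV[R]_k) : 0 <= norminf v.
Proof.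
rewrite /norminf; apply: (big_ind (fun x => 0 <= x)) => //.
by move=> x y hx hy; rewrite le_max hx.
Qed.

Lemma le_norminf (R : realDomainType) k (v : 'cV[R]_k) i : `|v i 0| <= norminf v.
Proof. by rewrite /norminf (bigD1 i) //= le_max lexx. Qed.

Lemma norminf_le (R : realDomainType) k (v : 'cV[R]_k) e :
  0 <= e -> (forall i, `|v i 0| <= e) -> norminf v <= e.
Proof.
move=> he h; rewrite /norminf; apply: (big_ind (fun x => x <= e)) => //.
by move=> x y hx hy; rewrite ge_max hx hy.
Qed.

Theorem theorem2p1 (R : rcfType) (n : nat) (A B C Y : 'M[R]_n)
  (Q : 'M[R]_(n * n + (n * n + n * n))) (Rt : 'M[R]_(n * n)) (mu : R) :
  \rank (Hmat A B C Y) = (n * n)%N ->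
  Q^T *m Q = 1%:M ->
  (forall i j : 'I_(n * n), (j < i)%N -> Rt i j = 0) ->
  (Hmat A B C Y)^T = Q *m col_mx Rt 0 ->
  is_min (feasible A B C Y) mu ->
  let r := vec (C - A *m Y - Y^T *m B^T) in
  let z1 := invmx Rt^T *m r in
  let mubar := norminf (Q *m col_mx z1 0) in
  mu <= mubar /\ mubar <= Num.sqrt 3 * n%:R * mu.
Proof.
move=> hrank hQ _ hH [hfeas hmin] r z1 mubar.
have QQt : Q *m Q^T = 1%:M by apply: mulmx1C.
have Hdef : Hmat A B C Y = row_mx Rt^T 0 *m Q^T.
  by rewrite -[Hmat A B C Y]trmxK hH trmx_mul tr_col_mx trmx0.
have hunit : Rt^T \in unitmx.
  rewrite unitmx_tr -row_free_unit /row_free eqn_leq rank_leq_row /=.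
  apply: (@leq_trans (\rank (Hmat A B C Y))); first by rewrite hrank.
  rewrite Hdef; apply: leq_trans (mxrankM_maxl _ _) _.
  have -> : row_mx Rt^T (0 : 'M[R]_(n * n, n * n + n * n)) =
            Rt^T *m row_mx 1%:M 0 by rewrite mul_mx_row mulmx1 mulmx0.
  by apply: leq_trans (mxrankM_maxl _ _) _; rewrite mxrank_tr.
have HQ : Hmat A B C Y *m Q = row_mx Rt^T 0 by rewrite Hdef -mulmxA hQ mulmx1.
set z := Q *m col_mx z1 0.
have Hz : Hmat A B C Y *m z = r.
  by rewrite /z mulmxA HQ mul_row_col mul0mx addr0 /z1 mulKVmx.
split.
  apply: hmin; apply: (sol_feasible (x := z)) => //; first exact: norminf_ge0.
  exact: le_norminf.
have mu0 : 0 <= mu by case: hfeas.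
have [x [Hx bx]] := feasible_sol hfeas.
set w := Q^T *m x.
have hw : usubmx w = z1.
  have : Hmat A B C Y *m x = Rt^T *m usubmx w.
    by rewrite Hdef -mulmxA -/w -[w]vsubmxK mul_row_col mul0mx addr0 col_mxKu.
  by rewrite Hx => h; rewrite /z1 /r h mulKmx.
have ssx : ss x = ss w by rewrite /w ss_orth // trmxK.
have sszx : ss z <= ss x.
  rewrite ssx /z ss_orth // -[w]vsubmxK ss_col ss_col hw.
  by rewrite lerD2l /ss big1 ?ss_ge0 // => i _; rewrite mxE expr0n.
have ssxb : ss x <= (n * n + (n * n + n * n))%:R * mu ^+ 2.
  rewrite /ss; apply: (@le_trans _ _ (\sum_(i < (n * n + (n * n + n * n))) mu ^+ 2)).
    apply: ler_sum => i _; rewrite -real_normK ?num_real // expr2 expr2.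
    by apply: ler_pM => //; apply: bx.
  by rewrite sumr_const card_ord mulr_natl.
have hmz : mubar <= Num.sqrt (ss z).
  apply: norminf_le; first exact: sqrtr_ge0.
  by move=> i; rewrite -sqrtr_sqr; apply: ler_wsqrtr; apply: ss_entry.
apply: (le_trans hmz); apply: (le_trans (ler_wsqrtr sszx)).
apply: (le_trans (ler_wsqrtr ssxb)).
have -> : ((n * n + (n * n + n * n))%:R * mu ^+ 2 : R) = 3 * (n%:R * mu) ^+ 2.
  rewrite !natrD !natrM exprMn; ring.
by rewrite sqrtrM ?ler0n // sqrtr_sqr ger0_norm ?mulr_ge0 ?ler0n // mulrA.
Qed.
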